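(* For $\lambda\in[-1,1]$ let $C_\lambda(u_1,u_2,u_3)=u_1u_2u_3[1+\lambda(1-u_1)(1-u_2)(1-u_3)]$ on $[0,1]^3$. If $\lambda\in[-1,0]$, then $C_\lambda$ is $I(1,1,1)$, $I(1,-1,-1)$, $I(-1,1,-1)$ and $I(-1,-1,1)$. If $\lambda\in[0,1]$, then $C_\lambda$ is $I(-1,1,1)$, $I(1,-1,1)$, $I(1,1,-1)$ and $I(-1,-1,-1)$.
   Context: For $\alpha\in\{-1,1\}^n$ and a random vector $\mathbf X$, write $\alpha\mathbf X=(\alpha_1X_1,\dots,\alpha_nX_n)$; inequalities between vectors are componentwise. $\mathbf X$ is $I(\alpha)$ if for every $\mathbf x\in\mathbb R^n$, $\mathbb P[\alpha\mathbf X>\mathbf x\mid \alpha\mathbf X>\mathbf x']\le \mathbb P[\alpha\mathbf X>\mathbf x\mid \alpha\mathbf X>\mathbf x'']$ whenever $\mathbf x'\le\mathbf x''$ and $\mathbb P[\alpha\mathbf X>\mathbf x'']>0$. A copula is $I(\alpha)$ if a random vector with that distribution function is. *)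

(* Defs.v *)
From HB Require Import structures.
From mathcomp Require Import all_boot all_order all_algebra.
From mathcomp Require Import all_classical all_reals all_analysis.
Set Implicit Arguments. Unset Strict Implicit. Unset Printing Implicit Defensive.
Import Order.TTheory GRing.Theory Num.Theory.
Local Open Scope classical_set_scope.
Local Open Scope ring_scope.

Definition vec3 (R : realType) (a b c : R) : 'I_3 -> R :=
  fun i => nth 0 [:: a; b; c] (nat_of_ord i).

Definition C_lambda (R : realType) (lam : R) (u : 'I_3 -> R) : R :=
  u ord0 * u (inord 1) * u (inord 2) *
  (1 + lam * (1 - u ord0) * (1 - u (inord 1)) * (1 - u (inord 2))).

Definition clamp01 (R : realType) (t : R) : R := Num.min 1 (Num.max 0 t).

Definition copula_df (R : realType) (n : nat) (C : ('I_n -> R) -> R)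
  (x : 'I_n -> R) : R := C (fun i => clamp01 (x i)).

Definition random_vector d (T : measurableType d) (R : realType) (n : nat)
  (X : 'I_n -> T -> R) : Prop := forall i, measurable_fun setT (X i).

Definition has_df d (T : measurableType d) (R : realType) (P : probability T R)
  (n : nat) (X : 'I_n -> T -> R) (F : ('I_n -> R) -> R) : Prop :=
  forall x : 'I_n -> R, P [set t | forall i, X i t <= x i] = (F x)%:E.

Definition upper_event (T : Type) (R : realType) (n : nat)
  (alpha : 'I_n -> R) (X : 'I_n -> T -> R) (x : 'I_n -> R) : set T :=
  [set t | forall i, x i < alpha i * X i t].

Definition condP d (T : measurableType d) (R : realType) (P : probability T R)
  (A B : set T) : R := fine (P (A `&` B)) / fine (P B).

Definition is_I d (T : measurableType d) (R : realType) (P : probability T R)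
  (n : nat) (alpha : 'I_n -> R) (X : 'I_n -> T -> R) : Prop :=
  forall x x' x'' : 'I_n -> R,
    (forall i, x' i <= x'' i) ->
    (0 < P (upper_event alpha X x''))%E ->
    condP P (upper_event alpha X x) (upper_event alpha X x')
      <= condP P (upper_event alpha X x) (upper_event alpha X x'').

(* A copula C (on [0,1]^n) is I(alpha): a random vector with distribution
   function copula_df C is I(alpha).  (The law is determined by the
   distribution function, so we quantify over all such random vectors.) *)
Definition copula_is_I (R : realType) (n : nat) (C : ('I_n -> R) -> R)
  (alpha : 'I_n -> R) : Prop :=
  forall (d : measure_display) (T : measurableType d) (P : probability T R)
    (X : 'I_n -> T -> R),
    random_vector X -> has_df P X (copula_df C) -> is_I P alpha X.

(* Main.v *)
Require Import Defs.
From HB Require Import structures.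
From mathcomp Require Import all_boot all_order all_algebra.
From mathcomp Require Import all_classical all_reals all_analysis.
From mathcomp Require Import ring lra.
Import Order.TTheory GRing.Theory Num.Theory.
Local Open Scope classical_set_scope.
Local Open Scope ring_scope.
Set Implicit Arguments. Unset Strict Implicit.

Lemma cspec (R : realType) (t : R) :
  (t < 0 /\ clamp01 t = 0) \/ (0 <= t <= 1 /\ clamp01 t = t) \/ (1 < t /\ clamp01 t = 1).
Proof.
rewrite /clamp01; case: (leP 0 t) => h0.
  case: (leP t 1) => h1; [right; left | right; right]; split => //; lra.
by left; split => //; rewrite (min_r (@ler01 R)).
Qed.

Lemma c01 (R : realType) (t : R) : 0 <= clamp01 t <= 1.
Proof. case: (cspec t) => [[h ->]|[[h ->]|[h ->]]]; lra. Qed.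

Lemma c1 (R : realType) : clamp01 (1 : R) = 1.
Proof. case: (cspec (1:R)) => [[h ->]|[[h ->]|[h ->]]]; lra. Qed.

Lemma cmono (R : realType) (a b : R) : a <= b -> clamp01 a <= clamp01 b.
Proof.
move=> ab; case: (cspec a) => [[h ->]|[[h ->]|[h ->]]];
case: (cspec b) => [[h' ->]|[[h' ->]|[h' ->]]]; lra.
Qed.

Lemma clip (R : realType) (a b : R) : a <= b -> clamp01 b - clamp01 a <= b - a.
Proof.
move=> ab; case: (cspec a) => [[h ->]|[[h ->]|[h ->]]];
case: (cspec b) => [[h' ->]|[[h' ->]|[h' ->]]]; lra.
Qed.
Definition G3 {R : realFieldType} (m u1 u2 u3 : R) :=
  u1 * u2 * u3 * (1 + m * (1 - u1) * (1 - u2) * (1 - u3)).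

Lemma f_mono (R : realFieldType) (m A x y : R) :
  0 <= m <= 1 -> 0 <= A <= 1 -> 0 <= x -> x <= y -> y <= 1 ->
  x * (1 + m * (1 - x) * A) <= y * (1 + m * (1 - y) * A).
Proof.
move=> /andP[m0 m1] /andP[A0 A1] x0 xy y1.
set k := m * A.
have k0 : 0 <= k by rewrite mulr_ge0.
have k1 : k <= 1 by rewrite -[1]mulr1 ler_pM.
rewrite -subr_ge0.
have -> : y * (1 + m * (1 - y) * A) - x * (1 + m * (1 - x) * A)
   = (y - x) * (1 + k * (1 - x - y)) by rewrite /k; ring.
apply: mulr_ge0; first lra.
nra.
Qed.

Lemma h_ratio (R : realFieldType) (m A B x y : R) :
  0 <= m -> A <= B -> 0 <= x -> x <= y ->
  y * (1 + m * (1 - y) * B) * (x * (1 + m * (1 - x) * A)) <=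
  x * (1 + m * (1 - x) * B) * (y * (1 + m * (1 - y) * A)).
Proof.
move=> m0 AB x0 xy; rewrite -subr_ge0.
have -> : x * (1 + m * (1 - x) * B) * (y * (1 + m * (1 - y) * A)) -
  y * (1 + m * (1 - y) * B) * (x * (1 + m * (1 - x) * A))
  = (x * y * m) * ((y - x) * (B - A)) by ring.
apply: mulr_ge0; first by rewrite !mulr_ge0 //; lra.
apply: mulr_ge0; lra.
Qed.

Definition hf {R : realFieldType} (m B t : R) := t * (1 + m * (1 - t) * B).

Lemma step1 (R : realFieldType) (m A B v x y : R) :
  0 <= m <= 1 -> 0 <= A -> A <= B -> B <= 1 -> 0 <= v -> 0 <= x -> x <= y -> y <= 1 ->
  hf m B (Num.min v y) * hf m A x <= hf m B (Num.min v x) * hf m A y.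
Proof.
move=> hm A0 AB B1 v0 x0 xy y1.
have hpos t : 0 <= t -> t <= 1 -> 0 <= hf m B t.
  move=> t0 t1; rewrite /hf mulr_ge0 //.
  case/andP: hm => m0 m1.
  have : 0 <= m * (1 - t) * B by rewrite !mulr_ge0 //; lra.
  lra.
have hfm : forall a b, 0 <= a -> a <= b -> b <= 1 -> hf m A a <= hf m A b.
  by move=> a b a0 ab b1; apply: f_mono => //; apply/andP; split => //; lra.
have hr : forall a b, 0 <= a -> a <= b -> hf m B b * hf m A a <= hf m B a * hf m A b.
  by move=> a b a0 ab; apply: h_ratio => //; case/andP: hm.
case: (leP v x) => vx.
  rewrite (min_l (le_trans vx xy)).
  by apply: ler_wpM2l; [apply: hpos; lra | apply: hfm].
case: (leP v y) => vy.
  apply: (le_trans (hr x v x0 (ltW vx))).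
  by apply: ler_wpM2l; [apply: hpos; lra | apply: hfm; lra].
exact: hr.
Qed.

Lemma G3E (R : realFieldType) (m t u2 u3 : R) :
  G3 m t u2 u3 = (u2 * u3) * hf m ((1 - u2) * (1 - u3)) t.
Proof. rewrite /G3 /hf; ring. Qed.

Lemma G3C12 (R : realFieldType) (m a b c : R) : G3 m a b c = G3 m b a c.
Proof. rewrite /G3; ring. Qed.

Lemma G3C13 (R : realFieldType) (m a b c : R) : G3 m a b c = G3 m c b a.
Proof. rewrite /G3; ring. Qed.

Definition in01 {R : realFieldType} (t : R) := 0 <= t <= 1.

Lemma in01_min (R : realFieldType) (a b : R) : in01 a -> in01 b -> in01 (Num.min a b).
Proof. by rewrite /in01; case: (leP a b). Qed.

Lemma Gmono1 (R : realFieldType) (m x y u2 u3 : R) :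
  0 <= m <= 1 -> 0 <= x -> x <= y -> y <= 1 -> in01 u2 -> in01 u3 ->
  G3 m x u2 u3 <= G3 m y u2 u3.
Proof.
move=> hm x0 xy y1 /andP[a0 a1] /andP[b0 b1].
rewrite !G3E; apply: ler_wpM2l; first exact: mulr_ge0.
apply: f_mono => //; apply/andP; split; first by apply: mulr_ge0; lra.
by rewrite -[1]mulr1; apply: ler_pM; lra.
Qed.

Lemma Gstep1 (R : realFieldType) (m v1 v2 v3 w1 w1' w2 w3 : R) :
  0 <= m <= 1 -> in01 v1 -> in01 v2 -> in01 v3 -> in01 w1 -> in01 w2 -> in01 w3 ->
  w1 <= w1' -> w1' <= 1 ->
  G3 m (Num.min v1 w1') (Num.min v2 w2) (Num.min v3 w3) * G3 m w1 w2 w3 <=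
  G3 m (Num.min v1 w1) (Num.min v2 w2) (Num.min v3 w3) * G3 m w1' w2 w3.
Proof.
move=> hm hv1 hv2 hv3 hw1 hw2 hw3 ww w1'1.
have hm2 := in01_min hv2 hw2; have hm3 := in01_min hv3 hw3.
have le2 : Num.min v2 w2 <= w2 by rewrite ge_min lexx orbT.
have le3 : Num.min v3 w3 <= w3 by rewrite ge_min lexx orbT.
move: hm2 hm3 le2 le3; set m2 := Num.min v2 w2; set m3 := Num.min v3 w3.
move=> /andP[m20 m21] /andP[m30 m31] le2 le3.
case/andP: hw2 => w20 w21; case/andP: hw3 => w30 w31.
case/andP: hv1 => v10 v11; case/andP: hw1 => w10 w11.
rewrite !G3E.
rewrite mulrACA [X in _ <= X]mulrACA.
apply: ler_wpM2l; first by rewrite !mulr_ge0.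
apply: step1 => //.
- by apply: mulr_ge0; lra.
- by apply: ler_pM; lra.
- by rewrite -[1]mulr1; apply: ler_pM; lra.
Qed.

Lemma chain (R : realFieldType) (Xw Xp Xq Yw Yp Yq : R) :
  0 < Yp -> 0 <= Yw -> 0 <= Yq ->
  Xp * Yw <= Xw * Yp -> Xq * Yp <= Xp * Yq -> Xq * Yw <= Xw * Yq.
Proof.
move=> Yp0 Yw0 Yq0 h1 h2.
rewrite -(ler_pM2l Yp0).
have e1 := ler_wpM2l Yq0 h1.
have e2 := ler_wpM2l Yw0 h2.
nra.
Qed.

Lemma G3_ge0 (R : realFieldType) (m y u2 u3 : R) :
  0 <= m <= 1 -> in01 y -> in01 u2 -> in01 u3 -> 0 <= G3 m y u2 u3.
Proof.
move=> hm /andP[y0 y1] h2 h3.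
have := Gmono1 hm (lexx 0) y0 y1 h2 h3.
by rewrite /G3 !mul0r.
Qed.

Lemma key (R : realFieldType) (m v1 v2 v3 w1 w2 w3 w1' w2' w3' : R) :
  0 <= m <= 1 -> in01 v1 -> in01 v2 -> in01 v3 -> in01 w1 -> in01 w2 -> in01 w3 ->
  in01 w1' -> in01 w2' -> in01 w3' ->
  w1 <= w1' -> w2 <= w2' -> w3 <= w3' -> 0 < G3 m w1 w2 w3 ->
  G3 m (Num.min v1 w1') (Num.min v2 w2') (Num.min v3 w3') * G3 m w1 w2 w3 <=
  G3 m (Num.min v1 w1) (Num.min v2 w2) (Num.min v3 w3) * G3 m w1' w2' w3'.
Proof.
move=> hm hv1 hv2 hv3 hw1 hw2 hw3 hw1' hw2' hw3' l1 l2 l3 pos.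
have [w10 w11] := andP hw1; have [w20 w21] := andP hw2; have [w30 w31] := andP hw3.
have [w10' w11'] := andP hw1'; have [w20' w21'] := andP hw2'; have [w30' w31'] := andP hw3'.
have s1 := Gstep1 hm hv1 hv2 hv3 hw1 hw2 hw3 l1 w11'.
have s2 := Gstep1 hm hv2 hv1 hv3 hw2 hw1' hw3 l2 w21'.
move: s2; rewrite (G3C12 m (Num.min v2 w2')) (G3C12 m w2) (G3C12 m (Num.min v2 w2)) (G3C12 m w2') => s2.
have s3 := Gstep1 hm hv3 hv2 hv1 hw3 hw2' hw1' l3 w31'.
move: s3; rewrite (G3C13 m (Num.min v3 w3')) (G3C13 m w3) (G3C13 m (Num.min v3 w3)) (G3C13 m w3') => s3.
have Pp : 0 < G3 m w1' w2 w3.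
  by apply: (lt_le_trans pos); apply: Gmono1.
have Pq : 0 < G3 m w1' w2' w3.
  apply: (lt_le_trans Pp); rewrite (G3C12 m w1') (G3C12 m w1' w2'); by apply: Gmono1.
have Pw : 0 <= G3 m w1 w2 w3 by apply: ltW.
have Pw' : 0 <= G3 m w1' w2' w3' by apply: G3_ge0.
have c1 := chain Pp Pw (ltW Pq) s1 s2.
exact: chain Pq Pw Pw' c1 s3.
Qed.
Definition Q d (T : measurableType d) (R : realType) (P : probability T R) (A : set T) : R :=
  fine (P A).

Lemma QDI d (T : measurableType d) (R : realType) (P : probability T R) (A B : set T) :
  measurable A -> measurable B -> Q P A = Q P (A `\` B) + Q P (A `&` B).
Proof.
move=> mA mB; rewrite /Q (measureDI P mA mB) fineD //; rewrite ?inE; apply: fin_num_measure.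
- exact: measurableD.
- exact: measurableI.
Qed.

Lemma Q_ge0 d (T : measurableType d) (R : realType) (P : probability T R) (A : set T) :
  0 <= Q P A.
Proof. by rewrite /Q fine_ge0. Qed.

Lemma Q_le d (T : measurableType d) (R : realType) (P : probability T R) (A B : set T) :
  measurable A -> measurable B -> A `<=` B -> Q P A <= Q P B.
Proof.
move=> mA mB AB; rewrite /Q fine_le ?fin_num_measure //.
by apply: le_measure; rewrite ?inE.
Qed.

Lemma QT d (T : measurableType d) (R : realType) (P : probability T R) : Q P setT = 1.
Proof. by rewrite /Q probability_setT. Qed.

Lemma Q_le1 d (T : measurableType d) (R : realType) (P : probability T R) (A : set T) :
  measurable A -> Q P A <= 1.
Proof. by move=> mA; rewrite -(QT P); apply: Q_le. Qed.

Lemma mle d (T : measurableType d) (R : realType) (Y : T -> R) (a : R) :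
  measurable_fun setT Y -> measurable [set t | Y t <= a].
Proof.
move=> mY; have := mY measurableT _ (measurable_itv `]-oo, a]).
rewrite setTI; congr measurable; apply/seteqP; split => t /=;
  by rewrite in_itv /=.
Qed.

Lemma mlt d (T : measurableType d) (R : realType) (Y : T -> R) (a : R) :
  measurable_fun setT Y -> measurable [set t | Y t < a].
Proof.
move=> mY; have := mY measurableT _ (measurable_itv `]-oo, a[).
rewrite setTI; congr measurable; apply/seteqP; split => t /=;
  by rewrite in_itv /=.
Qed.

Lemma mgt d (T : measurableType d) (R : realType) (Y : T -> R) (a : R) :
  measurable_fun setT Y -> measurable [set t | a < Y t].
Proof.
move=> mY; have := mY measurableT _ (measurable_itv `]a, +oo[).
rewrite setTI; congr measurable; apply/seteqP; split => t /=;
  by rewrite in_itv /= andbT.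
Qed.

Lemma L1 d (T : measurableType d) (R : realType) (P : probability T R) (Z : T -> R) x
  (S : set T) : measurable_fun setT Z -> measurable S ->
  Q P ([set t | x < Z t] `&` S) = Q P S - Q P ([set t | Z t <= x] `&` S).
Proof.
move=> mZ mS; rewrite (QDI P mS (mle x mZ)) (setIC S) addrK; congr (Q P _).
apply/seteqP; split => t /= [h1 h2]; split => //.
- by apply/negP; rewrite -ltNge.
- by rewrite ltNge; apply/negP.
Qed.

Lemma L3 d (T : measurableType d) (R : realType) (P : probability T R) (Z : T -> R)
  (S : set T) : measurable_fun setT Z -> measurable S -> Q P [set t | Z t <= 1] = 1 ->
  Q P S = Q P ([set t | Z t <= 1] `&` S).
Proof.
move=> mZ mS h1; rewrite (QDI P mS (mle 1 mZ)) (setIC S).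
suff -> : Q P (S `\` [set t | Z t <= 1]) = 0 by rewrite add0r.
apply/eqP; rewrite eq_le Q_ge0 andbT.
have := QDI P measurableT (mle 1 mZ); rewrite QT setTI h1 => h.
have -> : (0 : R) = Q P (setT `\` [set t | Z t <= 1]) by lra.
apply: Q_le.
- by apply: measurableD => //; apply: mle.
- by apply: measurableD => //; apply: mle.
- by move=> t [_ h2]; split.
Qed.

Lemma L2 d (T : measurableType d) (R : realType) (P : probability T R) (Z : T -> R)
  (S : set T) b : measurable_fun setT Z -> measurable S ->
  (forall e, 0 < e -> Q P [set t | Z t <= b] - Q P [set t | Z t <= b - e] <= e) ->
  Q P ([set t | Z t < b] `&` S) = Q P ([set t | Z t <= b] `&` S).
Proof.
move=> mZ mS hc.
have mA : measurable ([set t | Z t <= b] `&` S) by apply: measurableI => //; apply: mle.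
rewrite (QDI P mA (mlt b mZ)).
have -> : [set t | Z t <= b] `&` S `&` [set t | Z t < b] = [set t | Z t < b] `&` S.
  apply/seteqP; split => t /=; first by move=> [[_ h] h']; split.
  by move=> [h h']; split => //; split => //; apply: ltW.
suff -> : Q P ([set t | Z t <= b] `&` S `\` [set t | Z t < b]) = 0 by rewrite add0r.
apply/eqP; rewrite eq_le Q_ge0 andbT.
apply/ler_addgt0Pr => e e0; rewrite add0r.
apply: le_trans (hc e e0).
have mB : measurable [set t | Z t <= b - e] by apply: mle.
have := QDI P (mle b mZ) mB.
have -> : [set t | Z t <= b] `&` [set t | Z t <= b - e] = [set t | Z t <= b - e].
  apply/seteqP; split => t /=; first by move=> [].
  by move=> h; split => //; apply: le_trans h _; lra.
move=> ->; rewrite addrK.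
apply: Q_le.
- by apply: measurableD => //; apply: mlt.
- by apply: measurableD => //; apply: mle.
move=> t [[h1 _] h2]; split => // h3; apply: h2 => /=.
by apply: le_lt_trans h3 _; lra.
Qed.

Definition K3 {T : Type} (A B C : set T) := A `&` (B `&` C).

Lemma K3C12 (T : Type) (A B C : set T) : K3 A B C = K3 B A C.
Proof. by apply/seteqP; split => t /= [h1 [h2 h3]]. Qed.

Lemma K3C13 (T : Type) (A B C : set T) : K3 A B C = K3 C B A.
Proof. by apply/seteqP; split => t /= [h1 [h2 h3]]. Qed.

Definition sgn {R : realType} (b : bool) : R := if b then 1 else -1.
Definition Ev {T : Type} {R : realType} (b : bool) (Z : T -> R) (x : R) : set T :=
  [set t | x < sgn b * Z t].
Definition R1 {R : realType} (b : bool) (x : R) (g : R -> R) : R :=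
  if b then g 1 - g x else g (- x).

Lemma reduce1 d (T : measurableType d) (R : realType) (P : probability T R) (Z : T -> R)
  (B C : set T) (b : bool) (x : R) :
  measurable_fun setT Z -> measurable B -> measurable C ->
  Q P [set t | Z t <= 1] = 1 ->
  (forall b' e, 0 < e -> Q P [set t | Z t <= b'] - Q P [set t | Z t <= b' - e] <= e) ->
  Q P (K3 (Ev b Z x) B C) = R1 b x (fun a => Q P (K3 [set t | Z t <= a] B C)).
Proof.
move=> mZ mB mC h1 hc.
have mBC : measurable (B `&` C) by apply: measurableI.
case: b; rewrite /R1 /K3 /Ev /sgn.
- have -> : [set t | x < 1 * Z t] = [set t | x < Z t].
    by apply/seteqP; split => t /=; rewrite mul1r.
  by rewrite (L1 P x mZ mBC) -(L3 mZ mBC h1).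
- have -> : [set t | x < -1 * Z t] = [set t | Z t < - x].
    by apply/seteqP; split => t /=; rewrite mulN1r ltrNr.
  by rewrite (L2 mZ mBC (hc (- x))).
Qed.

Lemma K3cyc (T : Type) (A B C : set T) : K3 C A B = K3 A B C.
Proof. by apply/seteqP; split => t /= [h1 [h2 h3]]. Qed.

Lemma mEv d (T : measurableType d) (R : realType) (b : bool) (Z : T -> R) x :
  measurable_fun setT Z -> measurable (Ev b Z x).
Proof.
move=> mZ; case: b; rewrite /Ev /sgn.
- have -> : [set t | x < 1 * Z t] = [set t | x < Z t].
    by apply/seteqP; split => t /=; rewrite mul1r.
  exact: mgt.
- have -> : [set t | x < -1 * Z t] = [set t | Z t < - x].
    by apply/seteqP; split => t /=; rewrite mulN1r ltrNr.
  exact: mlt.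
Qed.

Definition sv {R : realType} (b : bool) (x : R) : R :=
  if b then 1 - clamp01 x else clamp01 (- x).

Lemma Qform d (T : measurableType d) (R : realType) (P : probability T R) (lam : R)
  (Y1 Y2 Y3 : T -> R) (b1 b2 b3 : bool) (x1 x2 x3 : R) :
  measurable_fun setT Y1 -> measurable_fun setT Y2 -> measurable_fun setT Y3 ->
  (forall a1 a2 a3, Q P (K3 [set t | Y1 t <= a1] [set t | Y2 t <= a2] [set t | Y3 t <= a3])
     = G3 lam (clamp01 a1) (clamp01 a2) (clamp01 a3)) ->
  Q P (K3 (Ev b1 Y1 x1) (Ev b2 Y2 x2) (Ev b3 Y3 x3)) =
  G3 (- lam * sgn b1 * sgn b2 * sgn b3) (sv b1 x1) (sv b2 x2) (sv b3 x3).
Proof.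
move=> hY1 hY2 hY3 H.
have G1 : G3 lam 1 1 1 = 1 by rewrite /G3; ring.
have H111 : Q P (K3 [set t | Y1 t <= 1] [set t | Y2 t <= 1] [set t | Y3 t <= 1]) = 1.
  by rewrite H c1.
have mK : measurable (K3 [set t | Y1 t <= 1] [set t | Y2 t <= 1] [set t | Y3 t <= 1]).
  by apply: measurableI; [apply: mle | apply: measurableI; apply: mle].
have u1 : Q P [set t | Y1 t <= 1] = 1.
  apply/eqP; rewrite eq_le Q_le1 /=; last exact: (mle 1 hY1).
  have : Q P (K3 [set t | Y1 t <= 1] [set t | Y2 t <= 1] [set t | Y3 t <= 1])
    <= Q P [set t | Y1 t <= 1].
    by apply: Q_le => //; [apply: mle | move=> t [] ].
  by rewrite H111.
have u2 : Q P [set t | Y2 t <= 1] = 1.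
  apply/eqP; rewrite eq_le Q_le1 /=; last exact: (mle 1 hY2).
  have : Q P (K3 [set t | Y1 t <= 1] [set t | Y2 t <= 1] [set t | Y3 t <= 1])
    <= Q P [set t | Y2 t <= 1].
    by apply: Q_le => //; [apply: mle | move=> t [_ []] ].
  by rewrite H111.
have u3 : Q P [set t | Y3 t <= 1] = 1.
  apply/eqP; rewrite eq_le Q_le1 /=; last exact: (mle 1 hY3).
  have : Q P (K3 [set t | Y1 t <= 1] [set t | Y2 t <= 1] [set t | Y3 t <= 1])
    <= Q P [set t | Y3 t <= 1].
    by apply: Q_le => //; [apply: mle | move=> t [_ []] ].
  by rewrite H111.
have mg1 b : Q P [set t | Y1 t <= b] = clamp01 b.
  rewrite (L3 hY2 (mle b hY1) u2) (L3 hY3 _ u3); last first.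
    by apply: measurableI; apply: mle.
  have -> : [set t | Y3 t <= 1] `&` ([set t | Y2 t <= 1] `&` [set t | Y1 t <= b])
    = K3 [set t | Y1 t <= b] [set t | Y2 t <= 1] [set t | Y3 t <= 1].
    by apply/seteqP; split => t /= [h1 [h2 h3]].
  by rewrite H c1 /G3; ring.
have mg2 b : Q P [set t | Y2 t <= b] = clamp01 b.
  rewrite (L3 hY1 (mle b hY2) u1) (L3 hY3 _ u3); last first.
    by apply: measurableI; apply: mle.
  have -> : [set t | Y3 t <= 1] `&` ([set t | Y1 t <= 1] `&` [set t | Y2 t <= b])
    = K3 [set t | Y1 t <= 1] [set t | Y2 t <= b] [set t | Y3 t <= 1].
    by apply/seteqP; split => t /= [h1 [h2 h3]].
  by rewrite H c1 /G3; ring.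
have mg3 b : Q P [set t | Y3 t <= b] = clamp01 b.
  rewrite (L3 hY1 (mle b hY3) u1) (L3 hY2 _ u2); last first.
    by apply: measurableI; apply: mle.
  have -> : [set t | Y2 t <= 1] `&` ([set t | Y1 t <= 1] `&` [set t | Y3 t <= b])
    = K3 [set t | Y1 t <= 1] [set t | Y2 t <= 1] [set t | Y3 t <= b].
    by apply/seteqP; split => t /= [h1 [h2 h3]].
  by rewrite H c1 /G3; ring.
have hcl (b e : R) : 0 < e -> clamp01 b - clamp01 (b - e) <= e.
  move=> e0; have := @clip R (b - e) b; lra.
have hc1 b e : 0 < e -> Q P [set t | Y1 t <= b] - Q P [set t | Y1 t <= b - e] <= e.
  by rewrite !mg1; apply: hcl.
have hc2 b e : 0 < e -> Q P [set t | Y2 t <= b] - Q P [set t | Y2 t <= b - e] <= e.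
  by rewrite !mg2; apply: hcl.
have hc3 b e : 0 < e -> Q P [set t | Y3 t <= b] - Q P [set t | Y3 t <= b - e] <= e.
  by rewrite !mg3; apply: hcl.
have mE2 := mEv b2 x2 hY2; have mE3 := mEv b3 x3 hY3.
have lvl3 a1 a2 : Q P (K3 [set t | Y2 t <= a2] [set t | Y1 t <= a1] (Ev b3 Y3 x3)) =
   R1 b3 x3 (fun a3 => G3 lam (clamp01 a1) (clamp01 a2) (clamp01 a3)).
  rewrite K3C13 reduce1 //; last 2 first.
  - exact: mle.
  - exact: mle.
  congr (R1 _ _ _); apply: funext => a3; by rewrite K3cyc H.
have lvl2 a1 : Q P (K3 [set t | Y1 t <= a1] (Ev b2 Y2 x2) (Ev b3 Y3 x3)) =
   R1 b2 x2 (fun a2 => R1 b3 x3 (fun a3 => G3 lam (clamp01 a1) (clamp01 a2) (clamp01 a3))).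
  rewrite K3C12 reduce1 //; last first.
  - exact: mle.
  congr (R1 _ _ _); apply: funext => a2; exact: lvl3.
rewrite reduce1 //.
have -> : (fun a => Q P (K3 [set t | Y1 t <= a] (Ev b2 Y2 x2) (Ev b3 Y3 x3))) =
   (fun a1 => R1 b2 x2 (fun a2 => R1 b3 x3 (fun a3 => G3 lam (clamp01 a1) (clamp01 a2) (clamp01 a3)))).
  by apply: funext => a1; exact: lvl2.
by clear lvl2 lvl3 mE2 mE3; case: b1; case: b2; case: b3; rewrite /R1 /sv /sgn /G3 /= ?c1; ring.
Qed.

Lemma forall3 (Pr : 'I_3 -> Prop) :
  (forall i, Pr i) <-> Pr ord0 /\ Pr (inord 1) /\ Pr (inord 2).
Proof.
split; first by move=> h; split; [|split].
move=> [h0 [h1 h2]] [[|[|[|k]]] hk] //.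
- by have -> : Ordinal hk = ord0 by apply: val_inj.
- by have -> : Ordinal hk = inord 1 by apply: val_inj; rewrite /= inordK.
- by have -> : Ordinal hk = inord 2 by apply: val_inj; rewrite /= inordK.
Qed.

Lemma vec3_0 (R : realType) (a b c : R) : vec3 a b c ord0 = a.
Proof. by []. Qed.
Lemma vec3_1 (R : realType) (a b c : R) : vec3 a b c (inord 1) = b.
Proof. by rewrite /vec3 inordK. Qed.
Lemma vec3_2 (R : realType) (a b c : R) : vec3 a b c (inord 2) = c.
Proof. by rewrite /vec3 inordK. Qed.

Lemma sv_anti (R : realType) (b : bool) (a a' : R) : a <= a' -> sv b a' <= sv b a.
Proof.
move=> h; case: b; rewrite /sv.
- by have := cmono h; lra.
- by apply: cmono; rewrite lerN2.
Qed.

Lemma sv_max (R : realType) (b : bool) (a a' : R) :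
  sv b (Num.max a a') = Num.min (sv b a) (sv b a').
Proof.
case: (leP a a') => h.
- by rewrite (min_r (sv_anti b h)).
- by rewrite (min_l (sv_anti b (ltW h))).
Qed.

Lemma sv01 (R : realType) (b : bool) (a : R) : in01 (sv b a).
Proof. rewrite /in01 /sv; case: b; have := c01 a; have := c01 (- a); lra. Qed.

Lemma gen (R : realType) (lam : R) (b1 b2 b3 : bool) :
  0 <= - lam * sgn b1 * sgn b2 * sgn b3 <= 1 ->
  copula_is_I (C_lambda lam) (vec3 (sgn b1) (sgn b2) (sgn b3)).
Proof.
move=> hm d T P X hX hdf x x' x'' hle hpos.
set Y1 := X ord0; set Y2 := X (inord 1); set Y3 := X (inord 2).
have hY1 : measurable_fun setT Y1 by apply: hX.
have hY2 : measurable_fun setT Y2 by apply: hX.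
have hY3 : measurable_fun setT Y3 by apply: hX.
have H3 a1 a2 a3 : Q P (K3 [set t | Y1 t <= a1] [set t | Y2 t <= a2] [set t | Y3 t <= a3])
     = G3 lam (clamp01 a1) (clamp01 a2) (clamp01 a3).
  have := hdf (vec3 a1 a2 a3).
  have -> : [set t | forall i, X i t <= vec3 a1 a2 a3 i] =
     K3 [set t | Y1 t <= a1] [set t | Y2 t <= a2] [set t | Y3 t <= a3].
    apply/seteqP; split => t /=.
    - by move/(forall3 (fun i => X i t <= vec3 a1 a2 a3 i)); rewrite vec3_0 vec3_1 vec3_2.
    - move=> h; apply/(forall3 (fun i => X i t <= vec3 a1 a2 a3 i)).
      by rewrite vec3_0 vec3_1 vec3_2.
  by rewrite /Q => ->; rewrite /copula_df /C_lambda /= vec3_1 vec3_2.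
set al := vec3 (sgn b1) (sgn b2) (sgn b3).
have Ueq z : upper_event al X z =
   K3 (Ev b1 Y1 (z ord0)) (Ev b2 Y2 (z (inord 1))) (Ev b3 Y3 (z (inord 2))).
  apply/seteqP; split => t /=.
  - by move/(forall3 (fun i => z i < al i * X i t)); rewrite /al vec3_0 vec3_1 vec3_2.
  - move=> h; apply/(forall3 (fun i => z i < al i * X i t)).
    by rewrite /al vec3_0 vec3_1 vec3_2.
have mU z : measurable (upper_event al X z).
  by rewrite Ueq; apply: measurableI; [|apply: measurableI]; apply: mEv.
have Uint z z' : upper_event al X z `&` upper_event al X z' =
    upper_event al X (fun i => Num.max (z i) (z' i)).
  apply/seteqP; split => t /=.
  - by move=> [h1 h2] i; rewrite gt_max h1 h2.
  - by move=> h; split => i; have := h i; rewrite gt_max => /andP[].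
have QU z : Q P (upper_event al X z) =
    G3 (- lam * sgn b1 * sgn b2 * sgn b3) (sv b1 (z ord0)) (sv b2 (z (inord 1)))
      (sv b3 (z (inord 2))).
  by rewrite Ueq; apply: Qform.
have pos'' : 0 < Q P (upper_event al X x'').
  rewrite /Q fine_gt0 // hpos /= (le_lt_trans (probability_le1 P (mU x''))) //.
  by rewrite ltry.
have pos' : 0 < Q P (upper_event al X x').
  apply: (lt_le_trans pos''); apply: Q_le => // t /= h i.
  by apply: le_lt_trans (h i); apply: hle.
rewrite /condP -/(Q P _) -/(Q P (upper_event al X x')) -/(Q P (upper_event al X x'')).
rewrite -/(Q P (upper_event al X x `&` upper_event al X x')).
rewrite -/(Q P (upper_event al X x `&` upper_event al X x'')).
rewrite ler_pdivrMr // mulrAC ler_pdivlMr //.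
move: pos'' pos'; rewrite !Uint !QU !sv_max => pos'' pos'.
apply: key => //; try exact: sv01.
- by apply: sv_anti; apply: hle.
- by apply: sv_anti; apply: hle.
- by apply: sv_anti; apply: hle.
Qed.

Unset Implicit Arguments.

Theorem mainTheorem7 (R : realType) (lam : R) :
  (-1 <= lam <= 0 ->
     copula_is_I (C_lambda lam) (vec3 1 1 1) /\
     copula_is_I (C_lambda lam) (vec3 1 (-1) (-1)) /\
     copula_is_I (C_lambda lam) (vec3 (-1) 1 (-1)) /\
     copula_is_I (C_lambda lam) (vec3 (-1) (-1) 1)) /\
  (0 <= lam <= 1 ->
     copula_is_I (C_lambda lam) (vec3 (-1) 1 1) /\
     copula_is_I (C_lambda lam) (vec3 1 (-1) 1) /\
     copula_is_I (C_lambda lam) (vec3 1 1 (-1)) /\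
     copula_is_I (C_lambda lam) (vec3 (-1) (-1) (-1))).
Proof.
split => /andP [h1 h2].
- split; [|split; [|split]].
  + by apply: (@gen R lam true true true); rewrite /sgn; apply/andP; split; lra.
  + by apply: (@gen R lam true false false); rewrite /sgn; apply/andP; split; lra.
  + by apply: (@gen R lam false true false); rewrite /sgn; apply/andP; split; lra.
  + by apply: (@gen R lam false false true); rewrite /sgn; apply/andP; split; lra.
- split; [|split; [|split]].
  + by apply: (@gen R lam false true true); rewrite /sgn; apply/andP; split; lra.
  + by apply: (@gen R lam true false true); rewrite /sgn; apply/andP; split; lra.
  + by apply: (@gen R lam true true false); rewrite /sgn; apply/andP; split; lra.
  + by apply: (@gen R lam false false false); rewrite /sgn; apply/andP; split; lra.
Qed.
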